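(* Let $m\ge 2$ and let $a_1,a_2,b_1,\dots,b_m,c_1,\dots,c_m\in\mathbb{C}$ satisfy $a_1\ne a_2$, $b_i\ne b_j$ and $c_i\ne c_j$ for $i\ne j$, and $a_1+(m-1)a_2=\sum_{i=1}^m(b_i+c_i)$. Define $m\times m$ matrices by $B_{ij}=b_i+c_{m+1-i}-a_2$ for $i<j$, $B_{ii}=b_i$, $B_{ij}=0$ for $i>j$; $C_{ij}=0$ for $i<j$, $C_{ii}=c_{m+1-i}$, $C_{ij}=b_i+c_{m+1-i}-a_2$ for $i>j$; and ${\bf A}={\bf B}+{\bf C}$. For $i=1,\dots,m$ let ${\bf v}_i$ be the eigenvector of ${\bf B}$ with eigenvalue $b_i$ whose $i$-th coordinate is $1$ and whose later coordinates are $0$. Assume $b_i+c_k-a_2\ne 0$ for all $i,k$, and define a symmetric bilinear form $\langle\cdot,\cdot\rangle$ on $\mathbb{C}^m$ by $\langle{\bf v}_i,{\bf v}_j\rangle=0$ for $i\ne j$ and $$\langle{\bf v}_i,{\bf v}_i\rangle=\frac{\prod_{k=i+1}^m(b_i-b_k)}{\prod_{k=1}^{i-1}(b_i-b_k)}\cdot\frac{\prod_{k=m+2-i}^m(b_i+c_k-a_2)}{\prod_{k=1}^{m+1-i}(b_i+c_k-a_2)}.$$ Then ${\bf A}$, ${\bf B}$ and ${\bf C}$ are self-adjoint with respect to $\langle\cdot,\cdot\rangle$.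
   Context: Empty products equal $1$. Coordinates are with respect to the standard basis of $\mathbb{C}^m$. *)

(* Defs.v *)
From HB Require Import structures.
From mathcomp Require Import all_boot all_order all_algebra.
From mathcomp Require Import complex.
From mathcomp Require Import reals.
Set Implicit Arguments. Unset Strict Implicit. Unset Printing Implicit Defensive.
Import Order.TTheory GRing.Theory Num.Theory.
Local Open Scope ring_scope.
Local Open Scope complex_scope.

(* Indices are 0-based: paper index i (1..m) corresponds to ordinal i-1.
   Paper's c_{m+1-i} corresponds to c (rev_ord i). *)

Section Defs.
Variables (F : fieldType) (m : nat).
Implicit Types (b c : 'I_m -> F).

Definition Bmx b c (a2 : F) : 'M[F]_m :=
  \matrix_(i, j) (if (i < j)%N then b i + c (rev_ord i) - a2
                  else if i == j then b i else 0).

Definition Cmx b c (a2 : F) : 'M[F]_m :=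
  \matrix_(i, j) (if (i < j)%N then 0
                  else if i == j then c (rev_ord i)
                  else b i + c (rev_ord i) - a2).

Definition Amx b c (a2 : F) : 'M[F]_m := Bmx b c a2 + Cmx b c a2.

(* <v_i, v_i> ; 0-based: the paper's product over k = m+2-i .. m becomes
   k' >= m - i', and over k = 1 .. m+1-i becomes k' < m - i'. *)
Definition vnorm b c (a2 : F) (i : 'I_m) : F :=
  (\prod_(k < m | (i < k)%N) (b i - b k)) / (\prod_(k < m | (k < i)%N) (b i - b k))
  * ((\prod_(k < m | (m - i <= k)%N) (b i + c k - a2))
     / (\prod_(k < m | (k < m - i)%N) (b i + c k - a2))).

Definition selfadjoint (G M : 'M[F]_m) : Prop :=
  forall x y : 'cV[F]_m, (M *m x)^T *m G *m y = x^T *m G *m (M *m y).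
End Defs.

(* Main.v *)
Require Import Defs.
From HB Require Import structures.
From mathcomp Require Import all_boot all_order all_algebra.
From mathcomp Require Import complex.
From mathcomp Require Import reals.
From mathcomp Require Import zify ring.
Import Order.TTheory GRing.Theory Num.Theory.
Set Implicit Arguments. Unset Strict Implicit. Unset Printing Implicit Defensive.
Local Open Scope ring_scope.



Section Lag.

Variable F : fieldType.

Lemma coef_prodX_hi (T : Type) (r : seq T) (f : T -> F) i : (size r <= i)%N ->
  (\prod_(l <- r) ('X - (f l)%:P))`_i = (i == size r)%:R.
Proof.
move=> hi; set p := \prod_(l <- r) _.
have sp : size p = (size r).+1 by rewrite size_prod_XsubC.
have [->|ne] := eqVneq i (size r).
  have := lead_coef_prod_XsubC r xpredT f; by rewrite /lead_coef sp /=.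
rewrite nth_default // sp; lia.
Qed.

Lemma coef_prodX_sub (T : Type) (r : seq T) (f : T -> F) :
  (\prod_(l <- r) ('X - (f l)%:P))`_(size r).-1 = (size r == 0%N)%:R - \sum_(l <- r) f l.
Proof.
elim: r => [|a r IH]; first by rewrite !big_nil coef1 /= subr0.
rewrite !big_cons /= mulrBl coefB coefXM coefCM.
case: r IH => [|a' r'] IH.
  rewrite !big_nil /= coef1 /= mulr1; ring.
rewrite IH coef_prodX_hi // eqxx /= mulr1 !sub0r; ring.
Qed.

Lemma lag (T : eqType) (rs : seq T) (x y : T -> F) :
  uniq rs -> {in rs &, injective x} ->
  \sum_(j <- rs) (\prod_(l <- rs) (x j - y l)) / (\prod_(l <- rs | l != j) (x j - x l))
  = \sum_(l <- rs) (x l - y l).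
Proof.
move=> urs xinj.
case E: rs => [|r0 rs']; first by rewrite !big_nil.
rewrite -E; set N := size rs.
have N0 : (0 < N)%N by rewrite /N E.
set Pp := \prod_(l <- rs) ('X - (y l)%:P).
set Q := \prod_(l <- rs) ('X - (x l)%:P).
pose L j := \prod_(l <- rs | l != j) ('X - (x l)%:P).
pose cj j := Pp.[x j] / (L j).[x j].
pose R := \sum_(j <- rs) cj j *: L j.
have sL j : j \in rs -> size (L j) = N.
  move=> jr; rewrite /L -big_filter size_prod_XsubC -rem_filter // size_rem //.
  by rewrite prednK.
have Lj0 j : j \in rs -> (L j).[x j] != 0.
  move=> jr; rewrite /L horner_prod prodf_seq_neq0; apply/allP => l lr.
  apply/implyP => lj; rewrite hornerXsubC subr_eq0; apply: contra lj.
  by move=> /eqP /(xinj _ _ jr lr) ->.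
have Lij i j : i \in rs -> j \in rs -> i != j -> (L i).[x j] = 0.
  move=> ir jr ij; rewrite /L horner_prod (big_rem j) //= eq_sym ij hornerXsubC subrr.
  by rewrite mul0r.
have hR : R = Pp - Q.
  apply/eqP; rewrite -subr_eq0; apply/eqP.
  set D := R - (Pp - Q).
  have sD : (size D <= N)%N.
    apply/leq_sizeP => i iN.
    rewrite /D coefB coefB /R coef_sum /Pp /Q !coef_prodX_hi // subrr subr0.
    rewrite big_seq big1 // => j jr.
    by rewrite coefZ nth_default ?mulr0 // sL.
  have rootsD : all (root D) (map x rs).
    apply/allP => _ /mapP [j jr ->]; rewrite /root /D !(hornerD, hornerN).
    have -> : Q.[x j] = 0.
      by rewrite /Q horner_prod (big_rem j) //= hornerXsubC subrr mul0r.
    suff -> : R.[x j] = Pp.[x j] by rewrite subr0 subrr.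
    rewrite /R horner_sum (big_rem j) //= hornerZ /cj mulfVK ?Lj0 //.
    rewrite big_seq big1 ?addr0 // => i.
    move=> ir0; have : i \in [predD1 rs & j] by rewrite -(mem_rem_uniq j urs).
    rewrite inE => /andP [ij ir].
    by rewrite hornerZ (Lij i j ir jr ij) mulr0.
  apply/eqP; apply/negPn/negP => D0.
  have := max_poly_roots D0 rootsD.
  rewrite map_inj_in_uniq // size_map => /(_ urs).
  by move=> h; have := leq_trans h sD; rewrite /N ltnn.
have := congr1 (fun p : {poly F} => p`_N.-1) hR.
rewrite /R coef_sum coefB /Pp /Q !coef_prodX_sub.
move=> E'.
transitivity (\sum_(i <- rs) (cj i *: L i)`_N.-1); last first.
  by rewrite E' sumrB; ring.
rewrite big_seq [RHS]big_seq; apply: eq_bigr => j jr; rewrite coefZ.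
have lc : (L j)`_N.-1 = 1.
  by rewrite -(sL j jr); exact: (lead_coef_prod_XsubC rs (fun l => l != j) x).
rewrite lc mulr1 /cj /Pp /L !horner_prod; congr (_ / _); apply: eq_bigr => l _;
  by rewrite hornerXsubC.
Qed.
End Lag.

Section Main.
Variables (F : fieldType) (m : nat) (b c : 'I_m -> F) (a2 : F).

Definition tl (f : 'I_m -> F) (k : nat) := \sum_(l < m | (k <= l)%N) f l.

Lemma tl_split f (l : 'I_m) : tl f l = f l + tl f l.+1.
Proof.
rewrite /tl (bigD1 l) //=; congr (_ + _); apply: eq_bigl => i.
rewrite -val_eqE /=; apply/idP/idP; lia.
Qed.

Lemma tl_ge f k : (m <= k)%N -> tl f k = 0.
Proof. by move=> hk; rewrite /tl big1 // => i /= hi; have := ltn_ord i; lia. Qed.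

Lemma tl_eq f g : (forall k : 'I_m, tl f k = tl g k) -> f =1 g.
Proof.
move=> h l.
have h' : tl f l.+1 = tl g l.+1.
  case: (ltnP l.+1 m) => hl; first exact: (h (Ordinal hl)).
  by rewrite !tl_ge.
have := tl_split f l; have := tl_split g l; rewrite h h' => ->.
by move/addIr.
Qed.

Lemma Bmx_row (x : 'cV[F]_m) (l : 'I_m) :
  (Bmx b c a2 *m x) l 0 = b l * x l 0
     + (b l + c (rev_ord l) - a2) * tl (fun i => x i 0) l.+1.
Proof.
rewrite mxE (bigD1 l) //= mxE ltnn eqxx; congr (_ + _).
rewrite /tl mulr_sumr big_mkcond [RHS]big_mkcond /=; apply: eq_bigr => i _.
rewrite mxE; have [hli|hli] := ltnP l i.
  have -> : (i != l) = true by apply/eqP => e; move: hli; rewrite e ltnn.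
  by [].
case: (eqVneq i l) => [->|ne] //=.
by rewrite mul0r.
Qed.

Lemma tail_closed (j : 'I_m) (vj : 'cV[F]_m) :
  injective b ->
  Bmx b c a2 *m vj = b j *: vj -> vj j 0 = 1 ->
  (forall k : 'I_m, (j < k)%N -> vj k 0 = 0) ->
  forall k : nat, (k <= j)%N -> tl (fun i => vj i 0) k =
    \prod_(l < m | (k <= l)%N && (l < j)%N) ((b j + c (rev_ord l) - a2) / (b j - b l)).
Proof.
move=> binj hB h1 h0.
have tlj : tl (fun i => vj i 0) j = 1.
  rewrite tl_split h1 /tl big1 ?addr0 // => i /= hi; exact: h0.
suff H : forall t k, (k + t)%N = j -> tl (fun i => vj i 0) k =
    \prod_(l < m | (k <= l)%N && (l < j)%N) ((b j + c (rev_ord l) - a2) / (b j - b l)).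
  by move=> k hk; apply: (H (j - k)%N); lia.
elim => [|t IH] k hk.
  rewrite addn0 in hk; rewrite hk tlj big1 // => l /andP [q1 q2]; exfalso; lia.
have km : (k < m)%N by have := ltn_ord j; lia.
pose ko := Ordinal km.
rewrite (tl_split _ ko) (IH k.+1); last by lia.
rewrite [RHS](bigD1 ko) /=; last by apply/andP; split => //; lia.
set P := \prod_(l < m | _) _.
have -> : \prod_(i < m | ((k <= i)%N && (i < j)%N) && (i != ko)) ((b j + c (rev_ord i) - a2) / (b j - b i)) = P.
  apply: eq_bigl => i; rewrite -val_eqE /=; apply/idP/idP; lia.
have row := Bmx_row vj ko.
rewrite hB !mxE (IH k.+1) in row; last by lia.
rewrite -/P in row.
have nz : b j - b ko != 0.
  rewrite subr_eq0; apply/eqP => /binj e.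
  by move: hk; rewrite e /=; lia.
have hx : vj ko 0 = (b ko + c (rev_ord ko) - a2) * P / (b j - b ko).
  apply: (mulIf nz); rewrite mulfVK //.
  rewrite mulrBr [vj ko 0 * b j]mulrC row; ring.
rewrite hx; field; exact: nz.
Qed.


Lemma selfadj_of (G M : 'M[F]_m) : M^T *m G = G *m M -> selfadjoint G M.
Proof.
move=> E x y; by rewrite trmx_mul -[x^T *m M^T *m G]mulmxA E !mulmxA.
Qed.

Lemma main_F (v : 'I_m -> 'cV[F]_m) (G : 'M[F]_m) :
  injective b ->
  (forall i k : 'I_m, b i + c k - a2 != 0) ->
  (forall i : 'I_m, Bmx b c a2 *m v i = b i *: v i) ->
  (forall i : 'I_m, v i i 0 = 1) ->
  (forall i k : 'I_m, (i < k)%N -> v i k 0 = 0) ->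
  G^T = G ->
  (forall i j : 'I_m, (v i)^T *m G *m v j
                      = (if i == j then vnorm b c a2 i else 0)%:M) ->
  [/\ selfadjoint G (Amx b c a2), selfadjoint G (Bmx b c a2)
    & selfadjoint G (Cmx b c a2)].
Proof.
move=> binj hne hB h1 h0 GT hG.
pose V : 'M[F]_m := \matrix_(k, j) v j k 0.
have VT N : V^T *m N *m V = \matrix_(i, j) ((v i)^T *m N *m v j) 0 0.
  apply/matrixP => i j; rewrite !mxE; apply: eq_bigr => k _; rewrite !mxE.
  by congr (_ * _); apply: eq_bigr => l _; rewrite !mxE.
have Vu : V \in unitmx.
  rewrite unitmxE -det_tr det_trig; last by apply/is_trig_mxP => i j hij; rewrite !mxE h0.
  by rewrite big1 ?unitr1 // => i _; rewrite !mxE h1.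
have VTu : V^T \in unitmx by rewrite unitmx_tr.
have can2 X Y : V^T *m X *m V = V^T *m Y *m V -> X = Y.
  move=> E; apply: (can_inj (mulKmx VTu)); apply: (can_inj (mulmxK Vu)); exact: E.
pose n := vnorm b c a2.
have hD : V^T *m G *m V = diag_mx (\row_i n i).
  rewrite VT; apply/matrixP => i j; rewrite [LHS]mxE hG !mxE /=.
  by case: eqVneq => [->|ne]; rewrite ?mulr1n ?mulr0n.
have hBV : Bmx b c a2 *m V = V *m diag_mx (\row_j b j).
  apply/matrixP => k j; rewrite mul_mx_diag !mxE.
  have := congr1 (fun M : 'cV_m => M k 0) (hB j); rewrite !mxE => E'.
  by rewrite mulrC -E'; apply: eq_bigr => l _; rewrite !mxE.
have sB : (Bmx b c a2)^T *m G = G *m Bmx b c a2.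
  apply: can2.
  have -> : V^T *m ((Bmx b c a2)^T *m G) *m V = diag_mx (\row_j b j) *m (V^T *m G *m V).
    by rewrite !mulmxA -trmx_mul hBV trmx_mul tr_diag_mx.
  have -> : V^T *m (G *m Bmx b c a2) *m V = (V^T *m G *m V) *m diag_mx (\row_j b j).
    by rewrite -!mulmxA hBV.
  rewrite hD; apply/matrixP => i j; rewrite mul_diag_mx mul_mx_diag !mxE.
  by case: eqVneq => [->|]; rewrite ?mulr1n ?mulr0n ?mulr0 ?mul0r // mulrC.
pose dv : 'cV[F]_m := \col_l (b l + c (rev_ord l) - a2).
have hGd : G *m dv = const_mx 1.
  pose e (j l : 'I_m) := b j + c (rev_ord l) - a2.
  pose q2 (j : 'I_m) := \prod_(l < m | (j <= l)%N) e j l.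
  pose p2 (j : 'I_m) := \prod_(l < m | (j < l)%N) (b j - b l).
  have bnz (j l : 'I_m) : j != l -> b j - b l != 0.
    by move=> jl; rewrite subr_eq0 (inj_eq binj).
  have p2nz j : p2 j != 0.
    by apply/prodf_neq0 => l hl; apply: bnz; rewrite -val_eqE /= neq_ltn hl.
  have q2nz j : q2 j != 0 by apply/prodf_neq0 => l _; exact: hne.
  pose w : 'cV[F]_m := \col_j (q2 j / p2 j).
  have tlv (j : 'I_m) (k : nat) : tl (fun i => v j i 0) k = if (k <= j)%N then
      \prod_(l < m | (k <= l)%N && (l < j)%N) (e j l / (b j - b l)) else 0.
    case: leqP => hk; first exact: (tail_closed binj (hB j) (h1 j) (h0 j) hk).
    by rewrite /tl big1 // => i hi; apply: h0; lia.
  have dvV : dv = V *m w.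
    apply/matrixP => k0 z; rewrite (ord1 z) {z}.
    suff H : (fun i => dv i 0) =1 (fun i => (V *m w) i 0) by exact: H k0.
    apply: tl_eq => k.
    transitivity (\sum_(j < m | (k <= j)%N) (q2 j / p2 j) *
       \prod_(l < m | (k <= l)%N && (l < j)%N) (e j l / (b j - b l))); last first.
      rewrite /tl; under [RHS]eq_bigr => i _ do rewrite mxE.
      rewrite exchange_big /= [LHS]big_mkcond; apply: eq_bigr => j _.
      rewrite -mulr_suml.
      have -> : \sum_(i < m | (k <= i)%N) V i j = tl (fun i => v j i 0) k.
        by apply: eq_bigr => i _; rewrite mxE.
      by rewrite tlv mxE; case: ifP => _; rewrite ?mul0r // mulrC.
    have L := lag (fun l : 'I_m => a2 - c (rev_ord l))
      (filter_uniq (fun l : 'I_m => (k <= l)%N) (index_enum_uniq 'I_m)) (in2W binj).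
    have E1 : \sum_(l < m | (k <= l)%N) dv l 0 = \sum_(l <- filter (fun l : 'I_m => (k <= l)%N) (index_enum 'I_m)) (b l - (a2 - c (rev_ord l))).
      by rewrite big_filter; apply: eq_bigr => l _; rewrite mxE; ring.
    rewrite /tl E1 -L big_filter; apply: eq_bigr => j hj.
    rewrite big_filter big_filter_cond prodf_div.
    set qk := \prod_(l < m | (k <= l < j)%N) e j l.
    set pk := \prod_(l < m | (k <= l < j)%N) (b j - b l).
    have E2 : \prod_(l < m | (k <= l)%N) (b j - (a2 - c (rev_ord l))) = qk * q2 j.
      rewrite (bigID (fun l : 'I_m => (l < j)%N)) /=; congr (_ * _).
        by apply: eq_bigr => l _; rewrite /e; ring.
      rewrite /q2; apply: eq_big => l; first by apply/idP/idP; lia.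
      by move=> _; rewrite /e; ring.
    have E3 : \prod_(l < m | (k <= l)%N && (l != j)) (b j - b l) = pk * p2 j.
      rewrite (bigID (fun l : 'I_m => (l < j)%N)) /=; congr (_ * _);
        by apply: eq_bigl => l; rewrite -val_eqE /=; apply/idP/idP; lia.
    have pknz : pk != 0.
      apply/prodf_neq0 => l /andP [_ hl]; apply: bnz.
      by rewrite -val_eqE /= neq_ltn hl orbT.
    by rewrite E2 E3; field; rewrite pknz p2nz.
  apply: (can_inj (mulKmx VTu)).
  rewrite dvV.
  have -> : V^T *m (G *m (V *m w)) = (V^T *m G *m V) *m w by rewrite !mulmxA.
  rewrite hD; apply/matrixP => j z; rewrite (ord1 z) {z} mul_diag_mx !mxE.
  have -> : \sum_(j0 < m) V^T j j0 * (const_mx 1 : 'cV[F]_m) j0 0 = tl (fun i => v j i 0) 0.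
    rewrite /tl [RHS]big_mkcond /=; apply: eq_bigr => i _; by rewrite !mxE mulr1.
  rewrite tlv /= prodf_div.
  set q1 := \prod_(l < m | _) e j l.
  set p1 := \prod_(l < m | _) (b j - b l).
  have p1nz : p1 != 0.
    apply/prodf_neq0 => l hl; apply: bnz; apply/eqP => e'.
    by move: hl; rewrite -e' ltnn ?andbF.
  have r0 : \prod_(k < m | (k < j)%N) (b j - b k) = p1 by apply: eq_bigl.
  have r1 : \prod_(k < m | (m - j <= k)%N) (b j + c k - a2) = q1.
    rewrite (reindex_inj rev_ord_inj) /=; apply: eq_bigl => l /=.
    by apply/idP/idP; have := ltn_ord l; have := ltn_ord j; lia.
  have r2 : \prod_(k < m | (k < m - j)%N) (b j + c k - a2) = q2 j.
    rewrite (reindex_inj rev_ord_inj) /=; apply: eq_bigl => l /=.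
    by apply/idP/idP; have := ltn_ord l; have := ltn_ord j; lia.
  have r3 : \prod_(k < m | (j < k)%N) (b j - b k) = p2 j by [].
  by rewrite /n /vnorm r0 r1 r2 r3; field; rewrite p1nz p2nz q2nz.
have hA : Amx b c a2 = a2%:M + dv *m (const_mx 1 : 'rV[F]_m).
  apply/matrixP => i j; rewrite !mxE big_ord1 !mxE.
  rewrite -!val_eqE /=; case: ltngtP => h; rewrite ?mulr1n ?mulr0n; ring.
have dG : dv^T *m G = const_mx 1 by rewrite -GT -trmx_mul hGd trmx_const.
have sA : (Amx b c a2)^T *m G = G *m Amx b c a2.
  rewrite hA raddfD /= trmx_mul tr_scalar_mx mulmxDl mulmxDr.
  rewrite -[_ *m dv^T *m G]mulmxA dG mulmxA hGd trmx_const.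
  by rewrite mul_scalar_mx mul_mx_scalar.
have sC : (Cmx b c a2)^T *m G = G *m Cmx b c a2.
  have -> : Cmx b c a2 = Amx b c a2 - Bmx b c a2 by rewrite /Amx addrAC subrr add0r.
  by rewrite raddfB /= mulmxBl mulmxBr sA sB.
by split; apply: selfadj_of.
Qed.

End Main.

Unset Implicit Arguments.

Theorem theorem2p6 (R : realType) (m : nat) (a1 a2 : R[i]) (b c : 'I_m -> R[i])
  (v : 'I_m -> 'cV[R[i]]_m) (G : 'M[R[i]]_m) :
  (2 <= m)%N ->
  a1 != a2 ->
  injective b ->
  injective c ->
  a1 + (m.-1)%:R * a2 = \sum_(i < m) (b i + c i) ->
  (forall i k : 'I_m, b i + c k - a2 != 0) ->
  (* v i is the eigenvector of B for b i with i-th coordinate 1 and later ones 0 *)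
  (forall i : 'I_m, Bmx b c a2 *m v i = b i *: v i) ->
  (forall i : 'I_m, v i i 0 = 1) ->
  (forall i k : 'I_m, (i < k)%N -> v i k 0 = 0) ->
  (* <x,y> = x^T G y is the symmetric bilinear form with the prescribed values *)
  G^T = G ->
  (forall i j : 'I_m, (v i)^T *m G *m v j
                      = (if i == j then vnorm b c a2 i else 0)%:M) ->
  [/\ selfadjoint G (Amx b c a2), selfadjoint G (Bmx b c a2)
    & selfadjoint G (Cmx b c a2)].
Proof.
move=> _ _ binj _ _ hne hB h1 h0 GT hG.
exact: (main_F binj hne hB h1 h0 GT hG).
Qed.
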